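(* Let $n$ be an even positive integer, and let $a,b$ be distinct integers with $0<a,b<n$, $a$ even and $b$ odd, so that $G=C_{2n}(a,b,n)$ is a $5$-regular circulant graph. Then $G$ admits a factorization (in the sense described in the context) as a Cartesian product of a $3$-regular circulant graph and a $2$-regular circulant graph if and only if there exist positive integers $p,q$ with $p>2$, $1<q<n$, $p\mid a$, $q\mid b$, $pq=2n$ and $\gcd(p,q)=1$.
   Context: For an integer $m$ and a set $R$ of positive integers each at most $m/2$, the circulant graph $C_m(R)$ has vertex set $\{0,1,\dots,m-1\}$, with $i$ and $j$ adjacent iff $\min(|i-j|,\,m-|i-j|)\in R$; it is regular of degree $2|R|$ if $m/2\notin R$ and of degree $2|R|-1$ if $m/2\in R$. $C_{2n}(a,b,n)$ denotes the circulant graph on $2n$ vertices with jump set $\{a,b,n\}$. The Cartesian product $G_1\square G_2$ has vertex set $V(G_1)\times V(G_2)$, with $(u_1,v_1)\sim(u_2,v_2)$ iff either $u_1=u_2$ and $v_1v_2\in E(G_2)$, or $v_1=v_2$ and $u_1u_2\in E(G_1)$. The factorization theorem for circulant graphs states: if $p,q$ are relatively prime, $R\subseteq[1,p/2]$, $S\subseteq[1,q/2]$ and $T=qR\cup pS$ (where $qR=\{qr:r\in R\}$, $pS=\{ps:s\in S\}$), then $C_{pq}(T)\cong C_p(R)\square C_q(S)$. ''$G=C_{2n}(a,b,n)$ admits a factorization as a Cartesian product of a $3$-regular and a $2$-regular circulant graph'' means: there exist relatively prime integers $p,q>1$ with $pq=2n$ and sets of integers $R\subseteq[1,p/2]$,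 $S\subseteq[1,q/2]$ with $qR\cup pS=\{a,b,n\}$, such that $C_p(R)$ is $3$-regular and $C_q(S)$ is $2$-regular (so that $G\cong C_p(R)\square C_q(S)$ by the factorization theorem). *)

(* Defs.v *)
From mathcomp Require Import all_boot.
Set Implicit Arguments. Unset Strict Implicit. Unset Printing Implicit Defensive.

(* Circulant graph C_m(R): vertices {0,...,m-1} = 'I_m; jump set R given as a
   (finite) sequence of naturals, read as a set via membership. *)
Definition circ_dist (i j : nat) : nat := if i <= j then j - i else i - j.

Definition circ_adj (m : nat) (R : seq nat) (i j : 'I_m) : bool :=
  minn (circ_dist i j) (m - circ_dist i j) \in R.

Definition circ_regular (m : nat) (R : seq nat) (k : nat) : Prop :=
  forall i : 'I_m, #|[set j : 'I_m | circ_adj R i j]| = k.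

Definition admits_3_2_factorization (n a b : nat) : Prop :=
  exists (p q : nat) (R S : seq nat),
    [/\ [/\ 1 < p, 1 < q, coprime p q & p * q = 2 * n],
        all (fun r => (1 <= r) && (r * 2 <= p)) R /\
        all (fun s => (1 <= s) && (s * 2 <= q)) S,
        (map (fun r => q * r) R ++ map (fun s => p * s) S) =i [:: a; b; n],
        circ_regular p R 3
      & circ_regular q S 2].

(* Main.v *)
Require Import Defs.
From mathcomp Require Import all_boot zify.

Lemma card_Nd m (i : 'I_m) d : 0 < d -> d * 2 <= m ->
  #|[set j : 'I_m | minn (circ_dist i j) (m - circ_dist i j) == d]| = (d * 2 != m).+1.
Proof.
move=> d0 dm.
case: m i dm => [|m] i dm; first by case: i.
set x := (if i + d < m.+1 then i + d else i + d - m.+1).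
set y := (if d <= i then i - d else i + m.+1 - d).
have hi := ltn_ord i.
have xlt : x < m.+1 by rewrite /x; case: ifP => ?; lia.
have ylt : y < m.+1 by rewrite /y; case: ifP => ?; lia.
have -> : [set j : 'I_m.+1 | minn (circ_dist i j) (m.+1 - circ_dist i j) == d]
   = [set inord x; inord y].
  apply/setP => j; rewrite !inE -!val_eqE /= !inordK //.
  have hj := ltn_ord j.
  rewrite /circ_dist /x /y; case: ifP; case: ifP; case: ifP => ? ? ?.
  1-8: apply/idP/idP; lia.
rewrite cards2 -val_eqE /= !inordK //.
rewrite /x /y; case: ifP; case: ifP => ? ?; lia.
Qed.

Lemma card_list m (i : 'I_m) L : uniq L -> all (fun r => (1 <= r) && (r * 2 <= m)) L ->
  #|[set j : 'I_m | minn (circ_dist i j) (m - circ_dist i j) \in L]|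
   = \sum_(d <- L) (d * 2 != m).+1.
Proof.
elim: L => [|d L IH] /=.
  by move=> _ _; rewrite big_nil; apply: eq_card0 => j; rewrite !inE.
move=> /andP[dL uL] /andP[/andP[d1 d2] aL].
rewrite big_cons -IH // -(@card_Nd m i d d1 d2).
set f := fun j : 'I_m => minn (circ_dist i j) (m - circ_dist i j).
have -> : [set j | f j \in d :: L] = [set j | f j == d] :|: [set j | f j \in L].
  by apply/setP => j; rewrite !inE.
rewrite cardsU.
have -> : [set j | f j == d] :&: [set j | f j \in L] = set0.
  apply/setP => j; rewrite !inE; case: eqP => // ->; by rewrite (negbTE dL).
by rewrite cards0 subn0.
Qed.

Lemma deg m R (i : 'I_m) : all (fun r => (1 <= r) && (r * 2 <= m)) R ->
  #|[set j | circ_adj R i j]| = \sum_(d <- undup R) (d * 2 != m).+1.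
Proof.
move=> aR; rewrite -(@card_list m i) ?undup_uniq //.
  by apply: eq_card => j; rewrite !inE /circ_adj mem_undup.
by apply/allP => x; rewrite mem_undup; move/allP: aR; apply.
Qed.

Lemma sum_odd m L : odd (\sum_(d <- L) (d * 2 != m).+1) -> has (fun d => d * 2 == m) L.
Proof.
elim: L => [|d L IH]; first by rewrite big_nil.
rewrite big_cons /=; case: eqP => [_|_] //=.
by rewrite negbK add0n.
Qed.

Theorem theorem31 (n a b : nat) :
  0 < n -> ~~ odd n ->
  a != b -> 0 < a < n -> 0 < b < n -> ~~ odd a -> odd b ->
  admits_3_2_factorization n a b <->
  (exists p q : nat,
     [/\ 0 < p, 0 < q, 2 < p & 1 < q < n] /\
     [/\ p %| a, q %| b, p * q = 2 * n & coprime p q]).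
Proof.
move=> n0 en ab /andP[a0 an] /andP[b0 bn] ea ob; split.
- case=> p [q [R [S [[p1 q1 cpq pq] [aR aS] Heq regR regS]]]].
  have i0 : 'I_p by exists 0; lia.
  have j0 : 'I_q by exists 0; lia.
  have pe : ~~ odd p.
    apply/negP => op.
    have := regR i0; rewrite deg // => h.
    have : odd (\sum_(d <- undup R) (d * 2 != p).+1) by rewrite h.
    move/sum_odd/hasP => [d _ /eqP dp]; move: op; rewrite -dp; lia.
  have qo : odd q.
    apply/negPn/negP => eq'.
    have : 2 %| gcdn p q by rewrite dvdn_gcd; apply/andP; split; rewrite dvdn2 ?negbK.
    by move/eqP: cpq => ->.
  have p4 : 3 < p.
    have := regR i0 => h.
    have : [set j | circ_adj R i0 j] \subset [set~ i0].
      apply/subsetP => j; rewrite !inE; apply: contraTneq => ->.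
      rewrite /circ_adj /circ_dist leqnn subnn /= min0n.
      by apply/negP => /(allP aR) /=.
    move/subset_leq_card; rewrite h cardsC1 card_ord; lia.
  case: S aS Heq regS => [|s S] aS Heq regS.
    have := regS j0.
    have -> : [set j | circ_adj [::] j0 j] = set0 by apply/setP => j; rewrite !inE.
    by rewrite cards0.
  have hs : p * s \in [:: a; b; n].
    by rewrite -Heq mem_cat; apply/orP; right; rewrite map_f // inE eqxx.
  have pa : p %| a.
    move: hs; rewrite !inE => /orP[/eqP <-|/orP[/eqP e|/eqP e]].
    + exact: dvdn_mulr.
    + move: ob; rewrite -e oddM (negbTE pe) //.
    + have : q = 2 * s.
        apply/eqP; rewrite -(@eqn_pmul2l p) //; last by lia.
        by rewrite pq -e mulnCA.
      by move=> e2; move: qo; rewrite e2 oddM.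
  have hb : b \in [:: a; b; n] by rewrite !inE eqxx orbT.
  move: hb; rewrite -Heq mem_cat => /orP[/mapP [r _ ->]|/mapP [r _ e]].
    exists p, q; split; first by have := leq_mul p4 (leqnn q); split; lia.
    split => //; exact: dvdn_mulr.
  by move: ob; rewrite e oddM (negbTE pe).
- case=> p [q [[p0 q0 p2 /andP[q1 qn]] [pa qb pq cpq]]].
  have qo : odd q.
    case/dvdnP: qb => k bk; move: ob; rewrite bk oddM; case/andP => //.
  have pe : ~~ odd p.
    apply/negP => op; have : odd (p * q) by rewrite oddM op qo.
    by rewrite pq oddM.
  case/dvdnP: pa => s es; case/dvdnP: qb => r er.
  have [h ph] : exists h, p = h * 2.
    by exists p./2; rewrite muln2 -{1}(odd_double_half p) (negbTE pe) add0n.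
  have nh : n = h * q.
    by apply/eqP; rewrite -(@eqn_pmul2l 2) // -pq ph mulnAC mulnC.
  have rh : r < h by nia.
  have sq : s * 2 < q by nia.
  exists p, q, [:: r; h], [:: s]; split.
  + by split => //; lia.
  + split; rewrite /= ?andbT; repeat (apply/andP; split); lia.
  + move=> x; rewrite /= !inE.
    have -> : q * r = b by lia.
    have -> : q * h = n by lia.
    have -> : p * s = a by lia.
    by case: (x == a); case: (x == b); case: (x == n); rewrite ?orbT.
  + move=> i; rewrite deg /=; last by rewrite /= ?andbT; repeat (apply/andP; split); lia.
    rewrite inE.
    have -> : (r == h) = false by apply/eqP; lia.
    rewrite big_cons big_seq1.
    have -> : (r * 2 != p) = true by apply/eqP; lia.
    have -> : (h * 2 != p) = false by apply/negbF/eqP; lia.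
    by [].
  + move=> i; rewrite deg /=; last by rewrite /= ?andbT; repeat (apply/andP; split); lia.
    rewrite big_seq1.
    have -> : (s * 2 != q) = true by apply/eqP; lia.
    by [].
Qed.
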